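(* For every $\delta>0$ there exists a real number $\varepsilon$ with $0<\varepsilon<\delta$ such that $$\inf_{n \ge 1} \, \Vert (1 + \varepsilon)^n \Vert > 2^{-17}\, \varepsilon\, |\log \varepsilon|^{-1}.$$
   Context: For a real number $x$, $\Vert x \Vert$ denotes the distance from $x$ to the nearest integer. $\log$ denotes the natural logarithm. The infimum is over all positive integers $n$. *)

(* Defs.v *)
From Stdlib Require Import Reals Lra.
Open Scope R_scope.

Definition dist_int (x : R) : R :=
  Rmin (x - IZR (Int_part x)) (IZR (Int_part x) + 1 - x).

Definition is_inf_pos (f : nat -> R) (r : R) : Prop :=
  (forall n, (1 <= n)%nat -> r <= f n) /\
  (forall m, (forall n, (1 <= n)%nat -> m <= f n) -> m <= r).

(* Main.v *)
Require Import Defs.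
From Stdlib Require Import Reals Lra Lia ZArith ClassicalEpsilon.
Open Scope R_scope.


Lemma exp_le : forall x y, x <= y -> exp x <= exp y.
Proof. intros x y H; destruct (Req_dec x y) as [->|]; [lra|]. left; apply exp_increasing; lra. Qed.

Lemma ln_le : forall x y, 0 < x -> x <= y -> ln x <= ln y.
Proof. intros x y Hx H; destruct (Req_dec x y) as [->|]; [lra|]. left; apply ln_increasing; lra. Qed.

Lemma ln_le_sub1 : forall y, 0 < y -> ln y <= y - 1.
Proof.
  intros y Hy. rewrite <- (exp_ln y) at 2 by lra.
  pose proof (exp_ineq1_le (ln y)). lra.
Qed.

Lemma exp_pow_INR : forall x n, exp x ^ n = exp (INR n * x).
Proof.
  intros x n; induction n.
  - simpl. rewrite Rmult_0_l, exp_0. reflexivity.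
  - rewrite S_INR. simpl. rewrite IHn. rewrite <- exp_plus. f_equal. ring.
Qed.

Lemma exp_sub_le : forall x y, x <= y -> exp y - exp x <= (y - x) * exp y.
Proof.
  intros x y H.
  assert (E : exp x = exp y * exp (-(y - x))) by (rewrite <- exp_plus; f_equal; ring).
  pose proof (exp_ineq1_le (-(y-x))). pose proof (exp_pos y).
  rewrite E. nra.
Qed.

Lemma exp_sub_ge : forall x y, x <= y -> (y - x) * exp x <= exp y - exp x.
Proof.
  intros x y H.
  assert (E : exp y = exp x * exp (y - x)) by (rewrite <- exp_plus; f_equal; ring).
  pose proof (exp_ineq1_le (y-x)). pose proof (exp_pos x).
  rewrite E. nra.
Qed.

Lemma dist_le : forall x (m : Z), dist_int x <= Rabs (x - IZR m).
Proof.
  intros x m. unfold dist_int.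
  destruct (base_Int_part x) as [H1 H2].
  destruct (Z.le_gt_cases m (Int_part x)) as [Hm|Hm].
  - apply IZR_le in Hm. eapply Rle_trans; [apply Rmin_l|].
    unfold Rabs; destruct (Rcase_abs _); lra.
  - assert (Hm' : (Int_part x + 1 <= m)%Z) by lia. apply IZR_le in Hm'.
    rewrite plus_IZR in Hm'.
    eapply Rle_trans; [apply Rmin_r|].
    unfold Rabs; destruct (Rcase_abs _); lra.
Qed.

Lemma dist_attained : forall x, exists m : Z, dist_int x = Rabs (x - IZR m).
Proof.
  intros x. unfold dist_int.
  destruct (base_Int_part x) as [H1 H2].
  destruct (Rle_dec (x - IZR (Int_part x)) (IZR (Int_part x) + 1 - x)).
  - exists (Int_part x). rewrite Rmin_left by lra.
    unfold Rabs; destruct (Rcase_abs _); lra.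
  - exists (Int_part x + 1)%Z. rewrite Rmin_right by lra. rewrite plus_IZR.
    unfold Rabs; destruct (Rcase_abs _); lra.
Qed.

Lemma dist_nonneg : forall x, 0 <= dist_int x.
Proof. intros x. destruct (dist_attained x) as [m ->]. apply Rabs_pos. Qed.

Lemma dist_lip : forall x y, dist_int y >= dist_int x - Rabs (x - y).
Proof.
  intros x y. destruct (dist_attained y) as [m Hm].
  pose proof (dist_le x m).
  assert (Rabs (x - IZR m) <= Rabs (x - y) + Rabs (y - IZR m)).
  { replace (x - IZR m) with ((x - y) + (y - IZR m)) by ring. apply Rabs_triang. }
  lra.
Qed.


Fixpoint rsum (f : nat -> R) (n : nat) : R :=
  match n with O => 0 | S n' => rsum f n' + f n' end.

Lemma rsum_ext : forall f g n, (forall i, (i < n)%nat -> f i = g i) -> rsum f n = rsum g n.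
Proof. intros f g n H; induction n; simpl; [reflexivity|]. rewrite IHn by (intros; apply H; lia). rewrite H by lia. reflexivity. Qed.

Lemma rsum_le : forall f g n, (forall i, (i < n)%nat -> f i <= g i) -> rsum f n <= rsum g n.
Proof. intros f g n H; induction n; simpl; [lra|]. pose proof (H n (Nat.lt_succ_diag_r n)). assert (rsum f n <= rsum g n) by (apply IHn; intros; apply H; lia). lra. Qed.

Lemma rsum_plus : forall f g n, rsum (fun i => f i + g i) n = rsum f n + rsum g n.
Proof. intros f g n; induction n; simpl; [ring|]. rewrite IHn; ring. Qed.

Lemma rsum_minus : forall f g n, rsum (fun i => f i - g i) n = rsum f n - rsum g n.
Proof. intros f g n; induction n; simpl; [ring|]. rewrite IHn; ring. Qed.

Lemma rsum_scal : forall c f n, rsum (fun i => c * f i) n = c * rsum f n.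
Proof. intros c f n; induction n; simpl; [ring|]. rewrite IHn; ring. Qed.

Lemma rsum_const : forall c n, rsum (fun _ => c) n = INR n * c.
Proof. intros c n; induction n; simpl rsum; [simpl; ring|]. rewrite IHn, S_INR; ring. Qed.

Lemma rsum_nonneg : forall f n, (forall i, (i < n)%nat -> 0 <= f i) -> 0 <= rsum f n.
Proof. intros f n H; induction n; simpl; [lra|]. pose proof (H n (Nat.lt_succ_diag_r n)). assert (0 <= rsum f n) by (apply IHn; intros; apply H; lia). lra. Qed.

Lemma rsum_ge_term : forall f n k, (forall i, (i < n)%nat -> 0 <= f i) -> (k < n)%nat -> f k <= rsum f n.
Proof.
  intros f n k H Hk; induction n; [lia|]. simpl.
  destruct (Nat.eq_dec k n) as [->|Hne].
  - assert (0 <= rsum f n) by (apply rsum_nonneg; intros; apply H; lia). lra.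
  - assert (f k <= rsum f n) by (apply IHn; [intros; apply H; lia|lia]).
    pose proof (H n (Nat.lt_succ_diag_r n)). lra.
Qed.

Lemma rsum_pos_term : forall f n, 0 < rsum f n -> exists i, (i < n)%nat /\ 0 < f i.
Proof.
  intros f n; induction n; simpl; [lra|]. intros H.
  destruct (Rlt_dec 0 (f n)) as [Hp|Hp].
  - exists n; split; [lia|assumption].
  - destruct IHn as [i [Hi Hf]]; [lra|]. exists i; split; [lia|assumption].
Qed.


Ltac rdec_tac := repeat match goal with |- context [Rle_dec ?x ?y] => let H := fresh in destruct (Rle_dec x y) as [H|H]; revert H end; intros; lra.

Definition ilen (al be u v : R) : R := Rmax 0 (Rmin be v - Rmax al u).

Lemma ilen_nonneg : forall al be u v, 0 <= ilen al be u v.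
Proof. intros; unfold ilen; apply Rmax_l. Qed.

Lemma ilen_split : forall al be p q r, p <= q -> q <= r ->
  ilen al be p q + ilen al be q r = ilen al be p r.
Proof.
  intros al be p q r H1 H2. unfold ilen, Rmax, Rmin.
  rdec_tac.
Qed.

Lemma ilen_part : forall al be u d N, 0 <= d ->
  rsum (fun i => ilen al be (u + INR i * d) (u + INR i * d + d)) N = ilen al be u (u + INR N * d).
Proof.
  intros al be u d N Hd. induction N.
  - simpl. unfold ilen, Rmax, Rmin.
    rdec_tac.
  - simpl rsum. rewrite IHN. rewrite S_INR.
    replace (u + (INR N + 1) * d) with (u + INR N * d + d) by ring.
    apply ilen_split; pose proof (pos_INR N); nra.
Qed.

Lemma ilen_bound : forall al be u v K m th, 0 < K -> 0 < th -> th < m ->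
  exp (K * al) = m - th -> exp (K * be) = m + th ->
  ilen al be u v <= 2 * th / (K * (m - th)).
Proof.
  intros al be u v K m th HK Hth Hm Eal Ebe.
  assert (Hpos : 0 < 2 * th / (K * (m - th))) by (apply Rdiv_lt_0_compat; nra).
  unfold ilen.
  set (p := Rmax al u). set (q := Rmin be v).
  destruct (Rle_dec (q - p) 0) as [Hle|Hlt].
  - rewrite Rmax_left by lra. lra.
  - rewrite Rmax_right by lra.
    assert (Hp : al <= p) by apply Rmax_l. assert (Hq : q <= be) by apply Rmin_l.
    assert (E1 : exp (K * q) <= m + th) by (rewrite <- Ebe; apply exp_le; nra).
    assert (E2 : m - th <= exp (K * p)) by (rewrite <- Eal; apply exp_le; nra).
    pose proof (exp_sub_ge (K * p) (K * q)) as E3.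
    assert (E4 : (K * q - K * p) * exp (K * p) <= 2 * th) by (apply Rle_trans with (exp (K*q) - exp (K*p)); [apply E3; nra| lra]).
    assert (E5 : K * (q - p) * (m - th) <= 2 * th).
    { apply Rle_trans with ((K * q - K * p) * exp (K * p)); [|exact E4].
      replace ((K * q - K * p)) with (K * (q - p)) by ring. apply Rmult_le_compat_l; nra. }
    apply (Rmult_le_reg_r (K * (m - th))); [nra|].
    replace (2 * th / (K * (m - th)) * (K * (m - th))) with (2 * th) by (field; split; lra).
    lra.
Qed.

Lemma harm_step : forall x, 1 <= x -> 1 / (x + 1) <= ln (x + 1) - ln x.
Proof.
  intros x Hx.
  pose proof (ln_le_sub1 (x / (x + 1))) as H.
  assert (Hd : 0 < x / (x+1)) by (apply Rdiv_lt_0_compat; lra).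
  specialize (H Hd).
  unfold Rdiv in H. rewrite ln_mult in H by (try lra; apply Rinv_0_lt_compat; lra).
  rewrite ln_Rinv in H by lra.
  replace (x * / (x + 1) - 1) with (- (1 / (x + 1))) in H by (field; lra).
  lra.
Qed.

Lemma harm_sum : forall x0 N, 1 <= x0 ->
  rsum (fun i => 1 / (x0 + INR i + 1)) N <= ln (x0 + INR N) - ln x0.
Proof.
  intros x0 N Hx. induction N.
  - simpl. replace (x0 + 0) with x0 by ring. lra.
  - simpl rsum. rewrite S_INR. pose proof (pos_INR N).
    pose proof (harm_step (x0 + INR N)).
    replace (x0 + (INR N + 1)) with (x0 + INR N + 1) by ring. lra.
Qed.

Lemma ln_diff_le : forall x y, 0 < x -> 0 < y -> ln x - ln y <= x / y - 1.
Proof.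
  intros x y Hx Hy. pose proof (ln_le_sub1 (x / y)) as H.
  assert (0 < x / y) by (apply Rdiv_lt_0_compat; lra).
  specialize (H H0). unfold Rdiv in H. rewrite ln_mult in H by (try lra; apply Rinv_0_lt_compat; lra).
  rewrite ln_Rinv in H by lra. unfold Rdiv. lra.
Qed.

Lemma exp_le_inv1m : forall x, x < 1 -> exp x * (1 - x) <= 1.
Proof.
  intros x Hx. pose proof (exp_ineq1_le (-x)). rewrite exp_Ropp in H.
  pose proof (exp_pos x).
  assert (exp x * (1 - x) <= exp x * / exp x) by (apply Rmult_le_compat_l; lra).
  rewrite Rinv_r in H1 by lra. lra.
Qed.


Section Tree.
Variables a c1 : R.
Hypothesis Ha : 0 < a.
Hypothesis Ha4 : a <= 1/4.
Hypothesis Hc : 0 < c1.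
Hypothesis Hca : 4 * c1 < a.

Definition meets (j : nat) (u h : R) : Prop :=
  (1 <= j)%nat /\ exists t, u <= t <= u + h /\ dist_int (exp (INR j * t)) < c1.

Definition mb (j : nat) (u h : R) : bool :=
  if excluded_middle_informative (meets j u h) then true else false.

Lemma mb_true : forall j u h, mb j u h = true -> meets j u h.
Proof. intros j u h; unfold mb; destruct (excluded_middle_informative _); congruence. Qed.
Lemma mb_false : forall j u h, mb j u h = false -> ~ meets j u h.
Proof. intros j u h; unfold mb; destruct (excluded_middle_informative _); congruence. Qed.

Definition thr (j : nat) (u : R) : R := c1 / (2 * INR (S j) * exp (INR (S j) * u)).
Definition Rn (j : nat) (u h : R) : nat := Z.to_nat (up (h / thr j u)).

Fixpoint Pt (n j : nat) (u h : R) (phi : nat -> R -> R -> R) {struct n} : R :=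
  if mb j u h then 0 else
  match n with
  | O => phi j u h
  | S n' => rsum (fun i => Pt n' (S j) (u + INR i * (h / INR (Rn j u h))) (h / INR (Rn j u h)) phi) (Rn j u h)
  end.

Fixpoint Qt (n j : nat) (u h : R) (phi : nat -> R -> R -> R) {struct n} : R :=
  match n with
  | O => phi j u h
  | S n' => rsum (fun i => Qt n' (S j) (u + INR i * (h / INR (Rn j u h))) (h / INR (Rn j u h)) phi) (Rn j u h)
  end.

Lemma Pt_comp : forall n m j u h phi,
  Pt (n + m) j u h phi = Pt n j u h (fun j' u' h' => Pt m j' u' h' phi).
Proof.
  induction n; intros m j u h phi.
  - simpl. destruct m; simpl; destruct (mb j u h); reflexivity.
  - simpl. destruct (mb j u h); [reflexivity|].
    apply rsum_ext; intros i _. apply IHn.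
Qed.

Lemma Qt_comp : forall n m j u h phi,
  Qt (n + m) j u h phi = Qt n j u h (fun j' u' h' => Qt m j' u' h' phi).
Proof.
  induction n; intros m j u h phi.
  - reflexivity.
  - simpl. apply rsum_ext; intros i _. apply IHn.
Qed.

Lemma Pt_ext_nm : forall n j u h phi psi,
  (forall j' u' h', ~ meets j' u' h' -> phi j' u' h' = psi j' u' h') ->
  Pt n j u h phi = Pt n j u h psi.
Proof.
  induction n; intros j u h phi psi H; simpl; destruct (mb j u h) eqn:E; try reflexivity.
  - apply H. apply mb_false; assumption.
  - apply rsum_ext; intros i _; apply IHn; assumption.
Qed.

Lemma Pt_minus : forall n j u h phi psi,
  Pt n j u h (fun j' u' h' => phi j' u' h' - psi j' u' h') = Pt n j u h phi - Pt n j u h psi.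
Proof.
  induction n; intros j u h phi psi; simpl; destruct (mb j u h); try ring.
  rewrite <- rsum_minus. apply rsum_ext; intros i _; apply IHn.
Qed.

Lemma Qt_plus : forall n j u h phi psi,
  Qt n j u h (fun j' u' h' => phi j' u' h' + psi j' u' h') = Qt n j u h phi + Qt n j u h psi.
Proof.
  induction n; intros j u h phi psi; simpl; try ring.
  rewrite <- rsum_plus. apply rsum_ext; intros i _; apply IHn.
Qed.

Lemma Qt_zero : forall n j u h, Qt n j u h (fun _ _ _ => 0) = 0.
Proof.
  induction n; intros j u h; simpl; [reflexivity|].
  rewrite (rsum_ext _ (fun _ => 0)) by (intros; apply IHn). rewrite rsum_const; ring.
Qed.

Lemma Qt_rsum : forall n j u h (g : nat -> nat -> R -> R -> R) N,
  Qt n j u h (fun j' u' h' => rsum (fun i => g i j' u' h') N) = rsum (fun i => Qt n j u h (g i)) N.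
Proof.
  intros n j u h g N. induction N.
  - simpl. apply Qt_zero.
  - simpl. rewrite <- IHN. apply (Qt_plus n j u h (fun j' u' h' => rsum (fun i => g i j' u' h') N) (g N)).
Qed.

Definition Inv (j : nat) (u h : R) : Prop :=
  a <= u /\ 0 < h /\ u + h <= 2 * a /\
  ((1 <= j)%nat -> INR j * h * exp (INR j * (u + h)) <= c1) /\
  (a <= h \/ c1 / (4 * INR (S j) * exp (INR (S j) * u)) <= h).

Lemma thr_pos : forall j u, 0 < thr j u.
Proof.
  intros j u. unfold thr. apply Rdiv_lt_0_compat; [lra|].
  pose proof (exp_pos (INR (S j) * u)). pose proof (lt_0_INR (S j) (Nat.lt_0_succ j)). nra.
Qed.

Lemma Rn_facts : forall j u h, 0 < h ->
  1 <= INR (Rn j u h) /\ h / thr j u < INR (Rn j u h) /\ INR (Rn j u h) <= h / thr j u + 1.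
Proof.
  intros j u h Hh. unfold Rn.
  pose proof (thr_pos j u).
  assert (Hy : 0 < h / thr j u) by (apply Rdiv_lt_0_compat; lra).
  destruct (archimed (h / thr j u)) as [H1 H2].
  assert (Hz : (0 < up (h / thr j u))%Z) by (apply lt_IZR; lra).
  rewrite INR_IZR_INZ, Z2Nat.id by lia.
  assert (Hz1 : (1 <= up (h / thr j u))%Z) by lia. apply IZR_le in Hz1.
  repeat split; lra.
Qed.

Lemma Rn_one : forall j u h, 0 < h -> h / thr j u < 1 -> Rn j u h = 1%nat.
Proof.
  intros j u h Hh Hl. unfold Rn.
  pose proof (thr_pos j u).
  assert (Hy : 0 < h / thr j u) by (apply Rdiv_lt_0_compat; lra).
  rewrite <- (tech_up (h / thr j u) 1); [reflexivity|lra|lra].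
Qed.

Lemma exp_le2 : forall x, x <= 1/2 -> exp x <= 2.
Proof.
  intros x Hx. pose proof (exp_ineq1_le (-x)). rewrite exp_Ropp in H.
  pose proof (exp_pos x).
  assert (1/2 * exp x <= / exp x * exp x) by (apply Rmult_le_compat_r; lra).
  rewrite Rinv_l in H1 by lra. lra.
Qed.

Lemma D_mono : forall j u j' u', (j <= j')%nat -> u <= u' -> 0 <= u ->
  4 * INR j * exp (INR j * u) <= 4 * INR j' * exp (INR j' * u').
Proof.
  intros j u j' u' Hj Hu Hu0.
  apply le_INR in Hj. pose proof (pos_INR j).
  assert (exp (INR j * u) <= exp (INR j' * u')) by (apply exp_le; nra).
  pose proof (exp_pos (INR j * u)). nra.
Qed.

Lemma Inv_child : forall j u h i, Inv j u h -> (i < Rn j u h)%nat ->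
  Inv (S j) (u + INR i * (h / INR (Rn j u h))) (h / INR (Rn j u h)) /\
  u <= u + INR i * (h / INR (Rn j u h)) /\
  u + INR i * (h / INR (Rn j u h)) + h / INR (Rn j u h) <= u + h.
Proof.
  intros j u h i [Hu [Hh [Huh [Himg Hlow]]]] Hi.
  destruct (Rn_facts j u h Hh) as [HR1 [HR2 HR3]].
  set (r := INR (Rn j u h)) in *.
  set (T := thr j u) in *.
  assert (HT : 0 < T) by apply thr_pos.
  assert (Hir : INR i + 1 <= r) by (unfold r; rewrite <- S_INR; apply le_INR; lia).
  pose proof (pos_INR i).
  assert (Hch : 0 < h / r) by (apply Rdiv_lt_0_compat; lra).
  assert (Hcu : u <= u + INR i * (h / r)) by nra.
  assert (Hcv : u + INR i * (h / r) + h / r <= u + h).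
  { replace (u + INR i * (h / r) + h / r) with (u + (INR i + 1) * (h / r)) by ring.
    assert ((INR i + 1) * (h / r) <= r * (h / r)) by nra.
    replace (r * (h / r)) with h in H0 by (field; lra). lra. }
  assert (HchT : h / r < T).
  { apply (Rmult_lt_reg_r r); [lra|]. replace (h / r * r) with h by (field; lra).
    apply (Rmult_lt_reg_r (/ T)); [apply Rinv_0_lt_compat; lra|].
    replace (T * r * / T) with r by (field; lra). unfold Rdiv in HR2. lra. }
  split; [|split; assumption].
  repeat split.
  - lra.
  - assumption.
  - lra.
  - intros _.
    set (ch := h / r) in *. set (cu := u + INR i * ch) in *.
    assert (Hsmall : INR (S j) * h <= 1/2).
    { destruct j.
      - simpl. lra.
      - assert (Hj1 : (1 <= S j)%nat) by lia. specialize (Himg Hj1).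
        pose proof (pos_INR (S j)) as Hp.
        assert (He1 : 1 <= exp (INR (S j) * (u + h))) by (pose proof (exp_ineq1_le (INR (S j) * (u+h))); nra).
        assert (Hjh : INR (S j) * h <= c1) by nra.
        assert (H1j : 1 <= INR (S j)) by (apply (le_INR 1); lia).
        rewrite (S_INR (S j)). nra. }
    assert (E1 : exp (INR (S j) * (cu + ch)) <= exp (INR (S j) * u) * 2).
    { assert (E0 : exp (INR (S j) * (cu + ch)) <= exp (INR (S j) * (u + h))) by (apply exp_le; pose proof (pos_INR (S j)); nra).
      rewrite (Rmult_plus_distr_l (INR (S j)) u h), exp_plus in E0.
      pose proof (exp_le2 _ Hsmall) as E3. pose proof (exp_pos (INR (S j) * u)) as E4. nra. }
    assert (E2 : INR (S j) * ch * exp (INR (S j) * u) <= c1 / 2).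
    { assert (E5 : INR (S j) * T * exp (INR (S j) * u) = c1 / 2).
      { unfold T, thr. field. split; [apply Rgt_not_eq, exp_pos|]. apply not_0_INR; lia. }
      pose proof (lt_0_INR (S j) (Nat.lt_0_succ j)) as E6. pose proof (exp_pos (INR (S j) * u)) as E7.
      rewrite <- E5. apply Rmult_le_compat_r; [lra|]. apply Rmult_le_compat_l; lra. }
    pose proof (lt_0_INR (S j) (Nat.lt_0_succ j)) as E8.
    assert (E9 : 0 <= INR (S j) * ch) by nra.
    assert (E10 : INR (S j) * ch * exp (INR (S j) * (cu + ch)) <= INR (S j) * ch * (exp (INR (S j) * u) * 2)) by (apply Rmult_le_compat_l; lra).
    lra.
  - destruct (Rlt_dec (h / T) 1) as [Hy1|Hy1].
    +
      assert (Hr1 : Rn j u h = 1%nat) by (apply Rn_one; assumption).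
      assert (Hi0 : i = 0%nat) by lia. subst i.
      unfold r; rewrite Hr1. change (INR 0) with 0. change (INR 1) with 1.
      replace (u + 0 * (h / 1)) with u by field. replace (h / 1) with h by field.
      destruct Hlow as [Hl|Hl]; [left; assumption|right].
      eapply Rle_trans; [|exact Hl].
      apply Rmult_le_compat_l; [lra|]. apply Rinv_le_contravar.
      * pose proof (lt_0_INR (S j) (Nat.lt_0_succ j)). pose proof (exp_pos (INR (S j) * u)). nra.
      * apply D_mono; [lia|lra|lra].
    + right.
      assert (Hr2 : r <= 2 * (h / T)) by lra.
      assert (T / 2 <= h / r).
      { apply (Rmult_le_reg_r r); [lra|]. replace (h / r * r) with h by (field; lra).
        assert (h = (h / T) * T) by (field; lra).
        assert (T / 2 * r <= T / 2 * (2 * (h / T))) by (apply Rmult_le_compat_l; lra).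
        lra. }
      eapply Rle_trans; [|exact H0].
      unfold T, thr.
      replace (c1 / (2 * INR (S j) * exp (INR (S j) * u)) / 2) with (c1 / (4 * INR (S j) * exp (INR (S j) * u))).
      2:{ field. split; [apply Rgt_not_eq, exp_pos|]. apply not_0_INR; lia. }
      apply Rmult_le_compat_l; [lra|]. apply Rinv_le_contravar.
      * pose proof (lt_0_INR (S j) (Nat.lt_0_succ j)). pose proof (exp_pos (INR (S j) * u)). nra.
      * apply D_mono; [lia|lra|lra].
Qed.


Ltac child_tac Hinv Hi :=
  let H := fresh in pose proof (Inv_child _ _ _ _ Hinv Hi) as H.

Lemma Pt_mono : forall n j u h phi psi, Inv j u h ->
  (forall u' h', Inv (j+n) u' h' -> u <= u' -> u' + h' <= u + h -> phi (j+n)%nat u' h' <= psi (j+n)%nat u' h') ->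
  Pt n j u h phi <= Pt n j u h psi.
Proof.
  induction n; intros j u h phi psi Hinv H; simpl; destruct (mb j u h); try lra.
  - rewrite Nat.add_0_r in H. apply H; [assumption|lra|lra].
  - apply rsum_le; intros i Hi.
    destruct (Inv_child j u h i Hinv Hi) as [Hc1 [Hc2 Hc3]].
    apply IHn; [assumption|].
    intros u' h' Hi' H1 H2. rewrite <- Nat.add_succ_comm in H. apply H; [assumption|lra|lra].
Qed.

Lemma Qt_mono : forall n j u h phi psi, Inv j u h ->
  (forall u' h', Inv (j+n) u' h' -> u <= u' -> u' + h' <= u + h -> phi (j+n)%nat u' h' <= psi (j+n)%nat u' h') ->
  Qt n j u h phi <= Qt n j u h psi.
Proof.
  induction n; intros j u h phi psi Hinv H; simpl.
  - rewrite Nat.add_0_r in H. apply H; [assumption|lra|lra].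
  - apply rsum_le; intros i Hi.
    destruct (Inv_child j u h i Hinv Hi) as [Hc1 [Hc2 Hc3]].
    apply IHn; [assumption|].
    intros u' h' Hi' H1 H2. rewrite <- Nat.add_succ_comm in H. apply H; [assumption|lra|lra].
Qed.

Lemma Pt_le_Qt : forall n j u h phi, Inv j u h ->
  (forall u' h', Inv (j+n) u' h' -> 0 <= phi (j+n)%nat u' h') ->
  Pt n j u h phi <= Qt n j u h phi /\ 0 <= Pt n j u h phi.
Proof.
  induction n; intros j u h phi Hinv H; simpl.
  - rewrite Nat.add_0_r in H. specialize (H u h Hinv). destruct (mb j u h); lra.
  - assert (K : forall i, (i < Rn j u h)%nat ->
      Pt n (S j) (u + INR i * (h / INR (Rn j u h))) (h / INR (Rn j u h)) phi <=
      Qt n (S j) (u + INR i * (h / INR (Rn j u h))) (h / INR (Rn j u h)) phi /\ 0 <= Pt n (S j) (u + INR i * (h / INR (Rn j u h))) (h / INR (Rn j u h)) phi).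
    { intros i Hi. destruct (Inv_child j u h i Hinv Hi) as [Hc1 _].
      apply IHn; [assumption|]. intros u' h' Hi'. rewrite <- Nat.add_succ_comm in H. apply H; assumption. }
    assert (K1 : rsum (fun i => Pt n (S j) (u + INR i * (h / INR (Rn j u h))) (h / INR (Rn j u h)) phi) (Rn j u h)
             <= rsum (fun i => Qt n (S j) (u + INR i * (h / INR (Rn j u h))) (h / INR (Rn j u h)) phi) (Rn j u h))
      by (apply rsum_le; intros; apply K; assumption).
    assert (K2 : 0 <= rsum (fun i => Pt n (S j) (u + INR i * (h / INR (Rn j u h))) (h / INR (Rn j u h)) phi) (Rn j u h))
      by (apply rsum_nonneg; intros; apply K; assumption).
    assert (K3 : 0 <= rsum (fun i => Qt n (S j) (u + INR i * (h / INR (Rn j u h))) (h / INR (Rn j u h)) phi) (Rn j u h)) by lra.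
    destruct (mb j u h); lra.
Qed.

Lemma Pt_point : forall n j u h, Inv j u h -> 0 < Pt n j u h (fun _ _ h' => h') ->
  exists t, u <= t <= u + h /\ forall i, (j <= i <= j + n)%nat -> (1 <= i)%nat -> dist_int (exp (INR i * t)) >= c1.
Proof.
  induction n; intros j u h Hinv HP; simpl in HP; destruct (mb j u h) eqn:E; try lra;
    apply mb_false in E.
  - exists u. split; [lra|]. intros i Hi H1.
    assert (i = j) by lia. subst i.
    destruct (Rlt_dec (dist_int (exp (INR j * u))) c1) as [Hl|Hl]; [|lra].
    exfalso; apply E; split; [assumption|]. exists u; split; [lra|assumption].
  - apply rsum_pos_term in HP. destruct HP as [i [Hi HP]].
    destruct (Inv_child j u h i Hinv Hi) as [Hc1 [Hc2 Hc3]].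
    destruct (IHn _ _ _ Hc1 HP) as [t [Ht Hall]].
    exists t; split; [lra|]. intros i0 Hi0 H1.
    destruct (Nat.eq_dec i0 j) as [->|Hne].
    + destruct (Rlt_dec (dist_int (exp (INR j * t))) c1) as [Hl|Hl]; [|lra].
      exfalso; apply E; split; [assumption|]. exists t; split; [lra|assumption].
    + apply Hall; [lia|assumption].
Qed.


Definition th := 2 * c1.
Definition phim (j : nat) (u h : R) : R := if mb j u h then h else 0.
Definition phin (al be : R) (j : nat) (u h : R) : R :=
  if Rle_dec al u then (if Rle_dec (u + h) be then h else 0) else 0.

Lemma Qt_sub_ilen : forall n j u h al be, Inv j u h ->
  Qt n j u h (phin al be) <= ilen al be u (u + h).
Proof.
  induction n; intros j u h al be Hinv; simpl.
  - unfold phin, ilen.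
    destruct (Rle_dec al u); [destruct (Rle_dec (u+h) be)|].
    + rewrite (Rmax_right al u), (Rmin_right be (u+h)) by (destruct Hinv as [_ [? _]]; lra). eapply Rle_trans; [|apply Rmax_r]; lra.
    + apply Rmax_l.
    + apply Rmax_l.
  - pose proof Hinv as Hinv0. destruct Hinv0 as [Hu [Hh Hrest]].
    destruct (Rn_facts j u h Hh) as [HR1 _].
    apply Rle_trans with (rsum (fun i => ilen al be (u + INR i * (h / INR (Rn j u h))) (u + INR i * (h / INR (Rn j u h)) + h / INR (Rn j u h))) (Rn j u h)).
    + apply rsum_le; intros i Hi. destruct (Inv_child j u h i Hinv Hi) as [Hcc _]. apply IHn; exact Hcc.
    + rewrite ilen_part by (apply Rlt_le, Rdiv_lt_0_compat; lra).
      replace (INR (Rn j u h) * (h / INR (Rn j u h))) with h by (field; lra). lra.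
Qed.

Definition alm (K : nat) (m : Z) := ln (IZR m - th) / INR K.
Definition bem (K : nat) (m : Z) := ln (IZR m + th) / INR K.
Definition M1 (K : nat) (u : R) : Z := Z.max 2 (up (exp (INR K * u) - th)).
Definition M2 (K : nat) (v : R) : Z := (up (exp (INR K * v) + th) - 1)%Z.
Definition cnt (K : nat) (u v : R) : nat := Z.to_nat (M2 K v - M1 K u + 1).

Lemma up_le_int : forall (m : Z) y, y < IZR m -> (up y <= m)%Z.
Proof.
  intros m y H. destruct (archimed y) as [H1 H2].
  destruct (Z_le_gt_dec (up y) m) as [|Hg]; [assumption|].
  assert (Hg' : (m <= up y - 1)%Z) by lia. apply IZR_le in Hg'. rewrite minus_IZR in Hg'. simpl in Hg'. lra.
Qed.

Lemma int_lt_up : forall (m : Z) y, IZR m < y -> (m <= up y - 1)%Z.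
Proof.
  intros m y H. destruct (archimed y) as [H1 H2].
  assert (IZR m < IZR (up y)) by lra. apply lt_IZR in H0. lia.
Qed.

Lemma leaf_cover : forall K u v u' h', (1 <= K)%nat -> Inv K u' h' -> u <= u' -> u' + h' <= v ->
  phim K u' h' <= rsum (fun i => phin (alm K (M1 K u + Z.of_nat i)) (bem K (M1 K u + Z.of_nat i)) K u' h') (cnt K u v).
Proof.
  intros K u v u' h' HK Hinv Hu Hv.
  assert (Hnn : forall i, (i < cnt K u v)%nat -> 0 <= phin (alm K (M1 K u + Z.of_nat i)) (bem K (M1 K u + Z.of_nat i)) K u' h').
  { intros i _. unfold phin. destruct Hinv as [_ [Hh _]].
    destruct (Rle_dec _ _); [destruct (Rle_dec _ _)|]; lra. }
  unfold phim. destruct (mb K u' h') eqn:E.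
  2:{ apply rsum_nonneg; assumption. }
  apply mb_true in E. destruct E as [_ [t0 [Ht0 Hd]]].
  destruct (dist_attained (exp (INR K * t0))) as [m Hm]. rewrite Hm in Hd.
  destruct Hinv as [Hau' [Hh' [Hu2 [Himg Hlow]]]]. specialize (Himg HK).
  assert (HKpos : 1 <= INR K) by (apply (le_INR 1); assumption).
  assert (Eimg : exp (INR K * (u' + h')) - exp (INR K * u') <= c1).
  { apply Rle_trans with ((INR K * (u'+h') - INR K * u') * exp (INR K * (u' + h'))).
    - apply exp_sub_le. nra.
    - replace (INR K * (u' + h') - INR K * u') with (INR K * h') by ring. lra. }
  assert (Et1 : exp (INR K * u') <= exp (INR K * t0)) by (apply exp_le; nra).
  assert (Et2 : exp (INR K * t0) <= exp (INR K * (u' + h'))) by (apply exp_le; nra).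
  apply Rabs_def2 in Hd. destruct Hd as [Hd1 Hd2].
  assert (Hm1 : IZR m - th < exp (INR K * u')) by (unfold th; lra).
  assert (Hm2 : exp (INR K * (u' + h')) < IZR m + th) by (unfold th; lra).
  assert (Hm2' : 2 <= IZR m).
  { pose proof (exp_ineq1_le (INR K * t0)). assert (INR K * t0 >= a) by nra.
    assert (1 < IZR m) by (unfold th in *; lra). apply lt_IZR in H1. apply IZR_le. lia. }
  assert (HthS : th < 1) by (unfold th; lra).
  assert (HmL : (M1 K u <= m)%Z).
  { unfold M1. apply Z.max_lub; [apply le_IZR; simpl; lra|].
    apply up_le_int. assert (exp (INR K * u) <= exp (INR K * u')) by (apply exp_le; nra). lra. }
  assert (HmR : (m <= M2 K v)%Z).
  { unfold M2. apply int_lt_up. assert (exp (INR K * (u'+h')) <= exp (INR K * v)) by (apply exp_le; nra). lra. }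
  set (i := Z.to_nat (m - M1 K u)).
  assert (Hi : (M1 K u + Z.of_nat i)%Z = m) by (unfold i; rewrite Z2Nat.id by lia; lia).
  apply Rle_trans with (phin (alm K (M1 K u + Z.of_nat i)) (bem K (M1 K u + Z.of_nat i)) K u' h').
  2:{ apply (rsum_ge_term (fun i0 => phin (alm K (M1 K u + Z.of_nat i0)) (bem K (M1 K u + Z.of_nat i0)) K u' h')); [assumption|]. unfold i, cnt. lia. }
  rewrite Hi. unfold phin, alm, bem.
  assert (HK0 : 0 < INR K) by lra.
  destruct (Rle_dec (ln (IZR m - th) / INR K) u') as [|Hn1].
  2:{ exfalso; apply Hn1. apply (Rmult_le_reg_l (INR K)); [lra|].
      replace (INR K * (ln (IZR m - th) / INR K)) with (ln (IZR m - th)) by (field; lra).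
      rewrite <- (ln_exp (INR K * u')). apply ln_le; lra. }
  destruct (Rle_dec (u' + h') (ln (IZR m + th) / INR K)) as [|Hn2]; [lra|].
  exfalso; apply Hn2. apply (Rmult_le_reg_l (INR K)); [lra|].
  replace (INR K * (ln (IZR m + th) / INR K)) with (ln (IZR m + th)) by (field; lra).
  rewrite <- (ln_exp (INR K * (u' + h'))). apply ln_le; [apply exp_pos|lra].
Qed.


Lemma M1_ge2 : forall K u, 2 <= IZR (M1 K u).
Proof. intros; unfold M1. apply IZR_le. lia. Qed.

Lemma node_bound : forall n w u h, Inv w u h -> (1 <= w + n)%nat ->
  Qt n w u h phim <= (4 * th / INR (w+n)) *
    (ln (IZR (M1 (w+n) u) + INR (cnt (w+n) u (u+h))) - ln (IZR (M1 (w+n) u))).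
Proof.
  intros n w u h Hinv HK.
  set (K := (w + n)%nat) in *.
  assert (HKr : 1 <= INR K) by (apply (le_INR 1); assumption).
  assert (Hth : 0 < th) by (unfold th; lra).
  assert (Hth2 : th < 1/2) by (unfold th; lra).
  set (x0 := IZR (M1 K u)).
  assert (Hx0 : 2 <= x0) by apply M1_ge2.
  apply Rle_trans with (Qt n w u h (fun j u' h' => rsum (fun i => phin (alm K (M1 K u + Z.of_nat i)) (bem K (M1 K u + Z.of_nat i)) j u' h') (cnt K u (u+h)))).
  { apply Qt_mono; [assumption|]. intros u' h' Hi' H1 H2. apply leaf_cover; assumption. }
  rewrite (Qt_rsum n w u h (fun i => phin (alm K (M1 K u + Z.of_nat i)) (bem K (M1 K u + Z.of_nat i)))).
  apply Rle_trans with (rsum (fun i => (4 * th / INR K) * (1 / (x0 + INR i + 1))) (cnt K u (u + h))).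
  2:{ rewrite rsum_scal. apply Rmult_le_compat_l.
      - apply Rlt_le, Rdiv_lt_0_compat; lra.
      - apply harm_sum; lra. }
  apply rsum_le; intros i Hi.
  eapply Rle_trans; [apply Qt_sub_ilen; assumption|].
  set (m := IZR (M1 K u + Z.of_nat i)).
  assert (Hm : m = x0 + INR i) by (unfold m, x0; rewrite plus_IZR, <- INR_IZR_INZ; reflexivity).
  pose proof (pos_INR i).
  eapply Rle_trans.
  - apply (ilen_bound _ _ _ _ (INR K) m th); try lra.
    + unfold alm. fold m. replace (INR K * (ln (m - th) / INR K)) with (ln (m - th)) by (field; lra).
      apply exp_ln; lra.
    + unfold bem. fold m. replace (INR K * (ln (m + th) / INR K)) with (ln (m + th)) by (field; lra).
      apply exp_ln; lra.
  - replace (2 * th / (INR K * (m - th))) with ((4 * th / INR K) * (1 / (2 * (m - th)))) by (field; split; lra).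
    apply Rmult_le_compat_l; [apply Rlt_le, Rdiv_lt_0_compat; lra|].
    unfold Rdiv. rewrite !Rmult_1_l. apply Rinv_le_contravar; lra.
Qed.


Lemma cnt_pos : forall K u v, (0 < cnt K u v)%nat ->
  IZR (M1 K u) + INR (cnt K u v) = IZR (M2 K v) + 1 /\ (M1 K u <= M2 K v)%Z.
Proof.
  intros K u v H. unfold cnt in *.
  assert (Hz : (0 < M2 K v - M1 K u + 1)%Z) by lia.
  rewrite INR_IZR_INZ, Z2Nat.id by lia. split; [|lia].
  rewrite !plus_IZR, minus_IZR. simpl. ring.
Qed.

Lemma M2_le : forall K v, IZR (M2 K v) <= exp (INR K * v) + th.
Proof.
  intros K v. unfold M2. rewrite minus_IZR. destruct (archimed (exp (INR K * v) + th)). simpl. lra.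
Qed.

Lemma M1_gt : forall K u, exp (INR K * u) - th < IZR (M1 K u).
Proof.
  intros K u. unfold M1. destruct (archimed (exp (INR K * u) - th)) as [H _].
  assert (IZR (up (exp (INR K * u) - th)) <= IZR (Z.max 2 (up (exp (INR K * u) - th)))) by (apply IZR_le; lia).
  lra.
Qed.

Lemma early_bound : forall n, (1 <= n)%nat ->
  Qt n 0 a a phim <= 8 * th * a.
Proof.
  intros n Hn.
  assert (Hinv : Inv 0 a a).
  { repeat split; try lra. intros H; lia. }
  pose proof (node_bound n 0 a a Hinv) as HB. simpl plus in HB. specialize (HB Hn).
  eapply Rle_trans; [exact HB|].
  assert (HKr : 1 <= INR n) by (apply (le_INR 1); assumption).
  assert (Hth : 0 < th) by (unfold th; lra).
  assert (Hcoef : 0 < 4 * th / INR n) by (apply Rdiv_lt_0_compat; lra).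
  destruct (Nat.eq_dec (cnt n a (a + a)) 0) as [H0|H0].
  - rewrite H0. simpl INR. rewrite Rplus_0_r. rewrite Rminus_diag. rewrite Rmult_0_r. nra.
  - destruct (cnt_pos n a (a + a)) as [E1 E2]; [lia|].
    rewrite E1.
    pose proof (M2_le n (a + a)) as E3. pose proof (M1_ge2 n a) as E4.
    apply IZR_le in E2.
    set (E := exp (INR n * (a + a))) in *.
    assert (HE : 0 < E) by apply exp_pos.
    assert (Hl1 : ln (IZR (M2 n (a + a)) + 1) <= ln (2 * E)) by (apply ln_le; unfold th in *; lra).
    rewrite ln_mult in Hl1 by lra. unfold E in Hl1. rewrite ln_exp in Hl1.
    assert (Hl2 : ln 2 <= ln (IZR (M1 n a))) by (apply ln_le; lra).
    apply Rle_trans with (4 * th / INR n * (INR n * (a + a))).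
    + apply Rmult_le_compat_l; lra.
    + replace (4 * th / INR n * (INR n * (a + a))) with (8 * th * a) by (field; lra). lra.
Qed.

Lemma late_bound : forall n w u h, Inv w u h -> (1 <= w)%nat ->
  2 <= exp (INR (w + n) * u) ->
  24 <= INR (w + n) * exp (INR (w + n) * u) * h ->
  INR (w + n) * h <= 1/32 ->
  Qt n w u h phim <= 10 * th * h.
Proof.
  intros n w u h Hinv Hw HE2 HP Hs.
  assert (HK : (1 <= w + n)%nat) by lia.
  pose proof (node_bound n w u h Hinv HK) as HB.
  eapply Rle_trans; [exact HB|].
  set (K := (w + n)%nat) in *.
  assert (HKr : 1 <= INR K) by (apply (le_INR 1); assumption).
  assert (Hth : 0 < th) by (unfold th; lra).
  assert (Hth1 : th < 1) by (unfold th; lra).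
  assert (Hcoef : 0 < 4 * th / INR K) by (apply Rdiv_lt_0_compat; lra).
  destruct Hinv as [Hu [Hh _]].
  destruct (Nat.eq_dec (cnt K u (u + h)) 0) as [H0|H0].
  - rewrite H0. simpl INR. rewrite Rplus_0_r. rewrite Rminus_diag. rewrite Rmult_0_r.
    assert (0 < th * h) by nra. lra.
  - destruct (cnt_pos K u (u + h)) as [E1 E2]; [lia|].
    rewrite E1.
    pose proof (M2_le K (u + h)) as E3. pose proof (M1_gt K u) as E4. pose proof (M1_ge2 K u) as E5.
    set (E := exp (INR K * u)) in *.
    set (F := exp (INR K * h)).
    assert (EF : exp (INR K * (u + h)) = E * F) by (unfold E, F; rewrite <- exp_plus; f_equal; ring).
    rewrite EF in E3.
    assert (HF1 : 1 <= F) by (unfold F; pose proof (exp_ineq1_le (INR K * h)); nra).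
    assert (HF2 : F * (1 - INR K * h) <= 1) by (unfold F; apply exp_le_inv1m; lra).
    assert (HF3 : F <= 32/31) by nra.
    assert (Hsub : E * F - E <= INR K * h * (E * F)).
    { pose proof (exp_sub_le (INR K * u) (INR K * (u + h))) as S1.
      replace (INR K * (u + h) - INR K * u) with (INR K * h) in S1 by ring.
      rewrite EF in S1. fold E in S1. apply S1. nra. }
    apply IZR_le in E2.
    set (x0 := IZR (M1 K u)) in *.
    set (X := IZR (M2 K (u + h)) + 1).
    assert (HX : X <= E * F + 2) by (unfold X; lra).
    assert (Hx0 : E - 1 < x0) by lra.
    pose proof (ln_diff_le X x0) as L. 
    assert (HX0 : 0 < X) by (unfold X; lra).
    specialize (L HX0 ltac:(lra)).
    assert (Hq : X / x0 - 1 <= 5/2 * (INR K * h)).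
    { apply (Rmult_le_reg_r x0); [lra|].
      replace ((X / x0 - 1) * x0) with (X - x0) by (field; lra).
      (* X - x0 <= E F - E + 3 <= K h E F + 3 ; and x0 >= E/2 *)
      assert (A1 : X - x0 <= INR K * h * (E * F) + 3) by lra.
      assert (A2 : 3 <= INR K * h * E / 8) by lra.
      assert (A3 : INR K * h * (E * F) <= INR K * h * E * (32/31)).
      { assert (0 <= INR K * h * E) by (pose proof (exp_pos (INR K * u)); fold E in H; nra). nra. }
      assert (A4 : E / 2 <= x0) by lra.
      assert (0 <= INR K * h) by nra.
      nra. }
    apply Rle_trans with (4 * th / INR K * (5/2 * (INR K * h))).
    + apply Rmult_le_compat_l; lra.
    + replace (4 * th / INR K * (5/2 * (INR K * h))) with (10 * th * h) by (field; lra). lra.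
Qed.

Lemma Pt_ext_inv : forall n j u h phi psi, Inv j u h ->
  (forall u' h', Inv (j+n) u' h' -> ~ meets (j+n) u' h' -> phi (j+n)%nat u' h' = psi (j+n)%nat u' h') ->
  Pt n j u h phi = Pt n j u h psi.
Proof.
  induction n; intros j u h phi psi Hinv H; simpl; destruct (mb j u h) eqn:E; try reflexivity.
  - rewrite Nat.add_0_r in H. apply H; [assumption|apply mb_false; assumption].
  - apply rsum_ext; intros i Hi.
    destruct (Inv_child j u h i Hinv Hi) as [Hc1 [Hc2 Hc3]].
    apply IHn; [assumption|].
    intros u' h' Hi' H1. rewrite <- Nat.add_succ_comm in H. apply H; assumption.
Qed.

Lemma Pt_scal : forall n j u h c phi,
  Pt n j u h (fun j' u' h' => c * phi j' u' h') = c * Pt n j u h phi.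
Proof.
  induction n; intros j u h c phi; simpl; destruct (mb j u h); try ring.
  rewrite <- rsum_scal. apply rsum_ext; intros i _; apply IHn.
Qed.

Definition len (j : nat) (u h : R) : R := h.
Definition mu (k : nat) : R := Pt k 0 a a len.
Definition bad (j : nat) (u h : R) : R := Qt 1 j u h phim.

Lemma Inv0 : Inv 0 a a.
Proof. repeat split; try lra. intros H; lia. Qed.

Lemma mu0 : mu 0 = a.
Proof.
  unfold mu. simpl. destruct (mb 0 a a) eqn:E; [|reflexivity].
  apply mb_true in E. destruct E as [H _]. lia.
Qed.

Lemma mu_step : forall k, mu (S k) = mu k - Pt k 0 a a bad.
Proof.
  intros k. unfold mu. replace (S k) with (k + 1)%nat by lia.
  rewrite Pt_comp. rewrite <- Pt_minus.
  apply Pt_ext_inv; [apply Inv0|].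
  intros u' h' Hi Hnm. simpl. simpl in Hnm. destruct (mb k u' h') eqn:E.
  { apply mb_true in E. contradiction. }
  unfold bad, len. simpl.
  destruct Hi as [_ [Hh _]].
  destruct (Rn_facts k u' h' Hh) as [HR1 _].
  transitivity (rsum (fun i => h' / INR (Rn k u' h') - phim (S k) (u' + INR i * (h' / INR (Rn k u' h'))) (h' / INR (Rn k u' h'))) (Rn k u' h')).
  - apply rsum_ext; intros i _; unfold phim; destruct (mb (S k) _ _); ring.
  - rewrite rsum_minus, rsum_const. field. lra.
Qed.

Lemma bad_nonneg : forall j u h, Inv j u h -> 0 <= bad j u h.
Proof.
  intros j u h Hinv. unfold bad. simpl. apply rsum_nonneg. intros i Hi.
  destruct (Inv_child j u h i Hinv Hi) as [[_ [Hh _]] _].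
  unfold phim. destruct (mb _ _ _); lra.
Qed.

Lemma bad_early : forall k, Pt k 0 a a bad <= 8 * th * a.
Proof.
  intros k.
  eapply Rle_trans.
  - apply (Pt_le_Qt k 0 a a bad Inv0). intros u' h' Hi. apply bad_nonneg; assumption.
  - unfold bad. rewrite <- Qt_comp. apply early_bound. lia.
Qed.

Variable s : nat.
Hypothesis Hs1 : (1 <= s)%nat.
Hypothesis L1 : 2 <= exp (INR s * a).
Hypothesis L2 : 24 <= a * exp (INR s * a).
Hypothesis L3 : 24 <= c1 / 4 * exp ((INR s - 1) * a).
Hypothesis L4 : c1 * (INR s + 1) <= 1/32.

Lemma late_conds : forall w u h, Inv w u h -> (1 <= w)%nat ->
  2 <= exp (INR (w + s) * u) /\
  24 <= INR (w + s) * exp (INR (w + s) * u) * h /\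
  INR (w + s) * h <= 1/32.
Proof.
  intros w u h [Hu [Hh [Huh [Himg Hlow]]]] Hw.
  specialize (Himg Hw).
  assert (Hw1 : 1 <= INR w) by (apply (le_INR 1); assumption).
  assert (Hs1r : 1 <= INR s) by (apply (le_INR 1); assumption).
  rewrite plus_INR.
  assert (Hexp : exp (INR s * a) <= exp ((INR w + INR s) * u)) by (apply exp_le; nra).
  assert (He1 : 1 <= exp (INR w * (u + h))) by (pose proof (exp_ineq1_le (INR w * (u + h))); nra).
  assert (Hwh : INR w * h <= c1) by nra.
  assert (Hh1 : h <= c1) by nra.
  split; [lra|split].
  - destruct Hlow as [Hl|Hl].
    + assert (0 < exp ((INR w + INR s) * u)) by apply exp_pos. nra.
    + set (D := 4 * INR (S w) * exp (INR (S w) * u)) in *.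
      assert (HD : 0 < D) by (unfold D; pose proof (exp_pos (INR (S w) * u)); pose proof (lt_0_INR (S w) (Nat.lt_0_succ w)); nra).
      assert (Hl' : c1 <= h * D) by (apply (Rmult_le_reg_r (/ D)); [apply Rinv_0_lt_compat; lra|];
        unfold Rdiv in Hl; replace (h * D * / D) with h by (field; lra); lra).
      assert (Hsplit : exp ((INR w + INR s) * u) = exp (INR (S w) * u) * exp ((INR s - 1) * u)).
      { rewrite <- exp_plus. f_equal. rewrite S_INR. ring. }
      assert (Hexp2 : exp ((INR s - 1) * a) <= exp ((INR s - 1) * u)) by (apply exp_le; nra).
      assert (Hkey : c1 / 4 * exp ((INR s - 1) * u) <= (INR w + INR s) * exp ((INR w + INR s) * u) * h).
      { rewrite Hsplit.
        assert (INR (S w) <= INR w + INR s) by (rewrite S_INR; lra).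
        unfold D in Hl'.
        pose proof (exp_pos (INR (S w) * u)). pose proof (exp_pos ((INR s - 1) * u)).
        pose proof (lt_0_INR (S w) (Nat.lt_0_succ w)).
        assert (c1 * exp ((INR s - 1) * u) <= h * (4 * INR (S w) * exp (INR (S w) * u)) * exp ((INR s - 1) * u)) by (apply Rmult_le_compat_r; lra).
        assert (h * INR (S w) * exp (INR (S w) * u) * exp ((INR s - 1) * u) <= h * (INR w + INR s) * exp (INR (S w) * u) * exp ((INR s - 1) * u)).
        { apply Rmult_le_compat_r; [lra|]. apply Rmult_le_compat_r; [lra|]. apply Rmult_le_compat_l; lra. }
        nra. }
      assert (c1 / 4 * exp ((INR s - 1) * a) <= c1 / 4 * exp ((INR s - 1) * u)) by (apply Rmult_le_compat_l; lra).
      lra.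
  - nra.
Qed.

Lemma bad_late : forall w, (1 <= w)%nat ->
  Pt (w + (s - 1)) 0 a a bad <= 10 * th * mu w.
Proof.
  intros w Hw. rewrite Pt_comp.
  unfold mu. rewrite <- Pt_scal.
  apply Pt_mono; [apply Inv0|]. intros u' h' Hi H1 H2. simpl plus.
  eapply Rle_trans.
  - apply (Pt_le_Qt (s - 1) w u' h' bad Hi). intros u'' h'' Hi'. apply bad_nonneg; assumption.
  - unfold bad. rewrite <- Qt_comp. replace (s - 1 + 1)%nat with s by lia.
    destruct (late_conds w u' h' Hi Hw) as [C1 [C2 C3]].
    unfold len. apply late_bound; assumption.
Qed.

Hypothesis L5 : 40 * c1 * INR s <= 1/2.

Lemma mu_ind : forall k, (forall i, (i <= k)%nat -> 0 < mu i) /\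
  (forall j, (j <= k)%nat -> (1 - 40 * c1 * (INR k - INR j)) * mu j <= mu k).
Proof.
  assert (Hs1r : 1 <= INR s) by (apply (le_INR 1); assumption).
  induction k.
  - split.
    + intros i Hi. assert (i = 0%nat) by lia. subst. rewrite mu0. lra.
    + intros j Hj. assert (j = 0%nat) by lia. subst. simpl. lra.
  - destruct IHk as [Hpos Hrat].
    assert (Hbad : exists w, (w <= k)%nat /\ (k - w <= s - 1)%nat /\ Pt k 0 a a bad <= 20 * c1 * mu w).
    { destruct (le_lt_dec (S k) s) as [Hle|Hlt].
      - exists 0%nat. split; [lia|split; [lia|]].
        pose proof (bad_early k) as B. rewrite mu0. unfold th in B. nra.
      - exists (S k - s)%nat. split; [lia|split; [lia|]].
        replace k with ((S k - s) + (s - 1))%nat at 1 by lia.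
        pose proof (bad_late (S k - s)%nat ltac:(lia)) as B. unfold th in B. lra. }
    destruct Hbad as [w [Hw1 [Hw2 Hb]]].
    specialize (Hrat w Hw1) as Hrw.
    assert (Hkw : INR k - INR w <= INR s - 1).
    { rewrite <- minus_INR by lia. replace (INR s - 1) with (INR (s - 1)) by (rewrite minus_INR by lia; simpl; ring). apply le_INR. lia. }
    assert (Hmw : 0 < mu w) by (apply Hpos; lia).
    assert (Hmk : 0 < mu k) by (apply Hpos; lia).
    assert (Heta : 40 * c1 * (INR k - INR w) <= 1/2) by nra.
    assert (Hmw2 : mu w <= 2 * mu k) by nra.
    assert (Hstep : (1 - 40 * c1) * mu k <= mu (S k)) by (rewrite mu_step; nra).
    assert (Heta1 : 40 * c1 <= 1/2) by nra.
    split.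
    + intros i Hi. destruct (Nat.eq_dec i (S k)) as [->|]; [nra|apply Hpos; lia].
    + intros j Hj. destruct (Nat.eq_dec j (S k)) as [->|Hne].
      * rewrite Rminus_diag. lra.
      * assert (Hjk : (j <= k)%nat) by lia.
        specialize (Hrat j Hjk). assert (Hmj : 0 < mu j) by (apply Hpos; lia).
        assert (Hjr : INR j <= INR k) by (apply le_INR; lia).
        rewrite S_INR.
        assert ((1 - 40 * c1 * (INR k + 1 - INR j)) * mu j <= (1 - 40 * c1) * ((1 - 40 * c1 * (INR k - INR j)) * mu j)).
        { assert (0 <= 40 * c1 * 40 * c1 * (INR k - INR j) * mu j).
          { apply Rmult_le_pos; [|lra]. apply Rmult_le_pos; [|lra]. nra. }
          nra. }
        assert ((1 - 40 * c1) * ((1 - 40 * c1 * (INR k - INR j)) * mu j) <= (1 - 40 * c1) * mu k) by (apply Rmult_le_compat_l; lra).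
        lra.
Qed.

Lemma finite_point : forall k, exists t, a <= t <= 2 * a /\
  forall i, (1 <= i <= k)%nat -> dist_int (exp (INR i * t)) >= c1.
Proof.
  intros k. destruct (mu_ind k) as [Hpos _].
  destruct (Pt_point k 0 a a Inv0 (Hpos k (Nat.le_refl k))) as [t [Ht Hall]].
  exists t. split; [lra|]. intros i Hi. apply Hall; lia.
Qed.

End Tree.




Lemma exp_close : forall (i : nat) x t, Rabs (t - x) <= 1 ->
  Rabs (exp (INR i * t) - exp (INR i * x)) <= INR i * exp (INR i * (x + 1)) * Rabs (t - x).
Proof.
  intros i x t H. pose proof (pos_INR i) as Hi.
  pose proof (Rle_abs (t - x)) as H1. pose proof (Rle_abs (-(t - x))) as H2. rewrite Rabs_Ropp in H2.
  destruct (Rle_dec t x) as [Htx|Htx].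
  - pose proof (exp_sub_le (INR i * t) (INR i * x) ltac:(nra)) as E.
    assert (exp (INR i * x) <= exp (INR i * (x + 1))) by (apply exp_le; nra).
    assert (exp (INR i * t) <= exp (INR i * x)) by (apply exp_le; nra).
    rewrite (Rabs_left1 (exp (INR i * t) - exp (INR i * x))) by lra.
    rewrite (Rabs_left1 (t - x)) by lra.
    assert (0 <= INR i * (x - t)) by nra.
    replace (INR i * x - INR i * t) with (INR i * (x - t)) in E by ring. nra.
  - pose proof (exp_sub_le (INR i * x) (INR i * t) ltac:(nra)) as E.
    assert (exp (INR i * t) <= exp (INR i * (x + 1))) by (apply exp_le; nra).
    assert (exp (INR i * x) <= exp (INR i * t)) by (apply exp_le; nra).
    rewrite (Rabs_right (exp (INR i * t) - exp (INR i * x))) by lra.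
    rewrite (Rabs_right (t - x)) by lra.
    assert (0 <= INR i * (t - x)) by nra.
    replace (INR i * t - INR i * x) with (INR i * (t - x)) in E by ring. nra.
Qed.

Definition Sk (c lo hi : R) (k : nat) (t : R) : Prop :=
  lo <= t <= hi /\ forall i, (1 <= i <= k)%nat -> dist_int (exp (INR i * t)) >= c.

Lemma glb_exists : forall (S : R -> Prop) lo, (exists t, S t) -> (forall t, S t -> lo <= t) ->
  { g : R | (forall t, S t -> g <= t) /\ (forall b, (forall t, S t -> b <= t) -> b <= g) }.
Proof.
  intros S lo Hne Hlo.
  destruct (completeness (fun y => S (- y))) as [l [Hub Hlub]].
  - exists (- lo). intros y Hy. specialize (Hlo _ Hy). lra.
  - destruct Hne as [t Ht]. exists (- t). rewrite Ropp_involutive. assumption.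
  - exists (- l). split.
    + intros t Ht. assert (- t <= l) by (apply Hub; rewrite Ropp_involutive; assumption). lra.
    + intros b Hb. assert (l <= - b) by (apply Hlub; intros y Hy; specialize (Hb _ Hy); lra). lra.
Qed.

Lemma limit_point : forall c lo hi, 
  (forall k, exists t, Sk c lo hi k t) ->
  exists t, lo <= t <= hi /\ forall i, (1 <= i)%nat -> dist_int (exp (INR i * t)) >= c.
Proof.
  intros c lo hi Hk.
  assert (G : forall k, { g : R | (forall t, Sk c lo hi k t -> g <= t) /\ (forall b, (forall t, Sk c lo hi k t -> b <= t) -> b <= g) }).
  { intros k. apply (glb_exists _ lo); [apply Hk|]. intros t [Ht _]; lra. }
  set (s := fun k => proj1_sig (G k)).
  assert (Hs1 : forall k t, Sk c lo hi k t -> s k <= t) by (intros k; unfold s; destruct (G k) as [g [H1 H2]]; exact H1).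
  assert (Hs2 : forall k b, (forall t, Sk c lo hi k t -> b <= t) -> b <= s k) by (intros k; unfold s; destruct (G k) as [g [H1 H2]]; exact H2).
  assert (Hsub : forall k k' t, (k <= k')%nat -> Sk c lo hi k' t -> Sk c lo hi k t).
  { intros k k' t Hkk [Ht Hi]. split; [assumption|]. intros i Hi'. apply Hi; lia. }
  assert (Hmono : forall k k', (k <= k')%nat -> s k <= s k').
  { intros k k' Hkk. apply Hs2. intros t Ht. apply Hs1. eapply Hsub; eassumption. }
  assert (Hlo : forall k, lo <= s k) by (intros k; apply Hs2; intros t [Ht _]; lra).
  assert (Hhi : forall k, s k <= hi).
  { intros k. destruct (Hk k) as [t Ht]. pose proof (Hs1 k t Ht). destruct Ht as [Ht _]. lra. }
  destruct (completeness (fun y => exists k, y = s k)) as [sig [Hub Hlub]].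
  { exists hi. intros y [k ->]. apply Hhi. }
  { exists (s 0%nat). exists 0%nat. reflexivity. }
  assert (Hsk : forall k, s k <= sig) by (intros k; apply Hub; exists k; reflexivity).
  assert (Hsig_app : forall e, 0 < e -> exists k, sig - e < s k).
  { intros e He. destruct (Classical_Prop.classic (exists k, sig - e < s k)) as [H|H]; [assumption|].
    exfalso. assert (sig <= sig - e); [|lra].
    apply Hlub. intros y [k ->]. destruct (Rle_dec (s k) (sig - e)) as [|Hn]; [assumption|].
    exfalso; apply H; exists k; lra. }
  exists sig. split.
  { split; [pose proof (Hlo 0%nat); pose proof (Hsk 0%nat); lra|]. apply Hlub. intros y [k ->]. apply Hhi. }
  intros i Hi.
  destruct (Rge_dec (dist_int (exp (INR i * sig))) c) as [|Hn]; [assumption|exfalso].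
  set (g := c - dist_int (exp (INR i * sig))).
  assert (Hg : 0 < g) by (unfold g; lra).
  set (M := INR i * exp (INR i * (sig + 1)) + 1).
  assert (HM : 0 < M) by (unfold M; pose proof (pos_INR i); pose proof (exp_pos (INR i * (sig + 1))); nra).
  set (d := Rmin 1 (g / M)).
  assert (Hd : 0 < d) by (unfold d; apply Rmin_pos; [lra|apply Rdiv_lt_0_compat; lra]).
  destruct (Hsig_app (d / 2) ltac:(lra)) as [k0 Hk0].
  set (k := Nat.max k0 i).
  assert (Hk1 : sig - d / 2 < s k) by (pose proof (Hmono k0 k ltac:(lia)); lra).
  assert (Ht : exists t, Sk c lo hi k t /\ t < s k + d / 2).
  { destruct (Classical_Prop.classic (exists t, Sk c lo hi k t /\ t < s k + d / 2)) as [H|H]; [assumption|].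
    exfalso. assert (s k + d / 2 <= s k); [|lra].
    apply Hs2. intros t Ht. destruct (Rle_dec (s k + d/2) t) as [|Hn']; [assumption|].
    exfalso; apply H; exists t; split; [assumption|lra]. }
  destruct Ht as [t [Ht Htlt]].
  pose proof (Hs1 k t Ht) as Hst.
  pose proof (Hsk k) as Hsig.
  assert (Hdist : Rabs (t - sig) < d).
  { apply Rabs_def1; lra. }
  assert (Hd1 : d <= 1) by apply Rmin_l.
  assert (Hd2 : d <= g / M) by apply Rmin_r.
  pose proof (exp_close i sig t ltac:(lra)) as EC.
  assert (EC2 : Rabs (exp (INR i * t) - exp (INR i * sig)) < g).
  { assert (INR i * exp (INR i * (sig + 1)) * Rabs (t - sig) <= M * Rabs (t - sig)).
    { apply Rmult_le_compat_r; [apply Rabs_pos|unfold M; lra]. }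
    assert (M * Rabs (t - sig) < M * (g / M)) by (apply Rmult_lt_compat_l; lra).
    replace (M * (g / M)) with g in H0 by (field; lra). lra. }
  destruct Ht as [_ Hall]. specialize (Hall i ltac:(lia)).
  pose proof (dist_lip (exp (INR i * t)) (exp (INR i * sig))) as DL.
  unfold g in EC2. lra.
Qed.


Lemma exp_sq_bound : forall x, 0 <= x -> (1 + x / 2) * (1 + x / 2) <= exp x.
Proof.
  intros x Hx. replace (exp x) with (exp (x/2) * exp (x/2)) by (rewrite <- exp_plus; f_equal; field).
  pose proof (exp_ineq1_le (x/2)). apply Rmult_le_compat; lra.
Qed.

Lemma ln4_le2 : ln 4 <= 2.
Proof.
  rewrite <- (ln_exp 2). apply ln_le; [lra|].
  replace (exp 2) with (exp 1 * exp 1) by (rewrite <- exp_plus; f_equal; ring).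
  pose proof (exp_ineq1_le 1). nra.
Qed.

Theorem theorem1 :
  forall delta : R, 0 < delta ->
  exists eps : R, 0 < eps /\ eps < delta /\ eps <> 1 /\
    exists r : R,
      is_inf_pos (fun n => dist_int ((1 + eps) ^ n)) r /\
      r > / 2 ^ 17 * eps * / Rabs (ln eps).
Proof.
  intros delta Hdelta.
  set (z := (Z.max 0 (up (4 / delta)) + 400000)%Z).
  set (N := Z.to_nat z).
  set (Nr := INR N).
  assert (HNz : Nr = IZR (Z.max 0 (up (4 / delta))) + 400000).
  { unfold Nr, N. rewrite INR_IZR_INZ, Z2Nat.id by (unfold z; lia). unfold z. rewrite plus_IZR. reflexivity. }
  assert (Hm0 : 0 <= IZR (Z.max 0 (up (4 / delta)))) by (apply IZR_le; lia).
  assert (Hm1 : IZR (up (4 / delta)) <= IZR (Z.max 0 (up (4 / delta)))) by (apply IZR_le; lia).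
  assert (HN1 : 393216 <= Nr) by lra.
  assert (HN2 : 4 / delta < Nr) by (destruct (archimed (4 / delta)); lra).
  set (E := exp Nr).
  assert (HE1 : (1 + Nr / 2) * (1 + Nr / 2) <= E) by (apply exp_sq_bound; lra).
  assert (HE2 : 1 + Nr <= E) by (apply exp_ineq1_le).
  set (a := exp (- Nr)).
  assert (HaE : a = / E) by (unfold a, E; apply exp_Ropp).
  assert (HaE1 : a * E = 1) by (rewrite HaE; field; unfold E; apply Rgt_not_eq, exp_pos).
  assert (Hapos : 0 < a) by apply exp_pos.
  assert (HEpos : 0 < E) by apply exp_pos.
  assert (Ha4 : a < 1/4) by nra.
  set (c1 := a / (1024 * Nr)).
  assert (Hc1 : c1 * (1024 * Nr) = a) by (unfold c1; field; lra).
  assert (Hcpos : 0 < c1) by (unfold c1; apply Rdiv_lt_0_compat; lra).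
  assert (Hca : 4 * c1 < a) by nra.
  set (y := 2 * Nr / a).
  assert (Hy : y = 2 * Nr * E) by (unfold y; rewrite HaE; field; lra).
  destruct (archimed y) as [Hu1 Hu2].
  assert (Hypos : 0 < y) by (rewrite Hy; nra).
  assert (Hupos : (0 <= up y)%Z) by (apply le_IZR; lra).
  set (s := S (Z.to_nat (up y))).
  assert (Hs : INR s = IZR (up y) + 1).
  { unfold s. rewrite S_INR, INR_IZR_INZ, Z2Nat.id by lia. reflexivity. }
  set (U := IZR (up y)) in *.
  assert (Hya : y * a = 2 * Nr) by (unfold y; field; lra).
  assert (HUa : 2 * Nr < U * a) by nra.
  assert (HUa2 : U * a <= 2 * Nr + a) by nra.
  assert (L1 : 2 <= exp (INR s * a)).
  { pose proof (exp_ineq1_le (INR s * a)). rewrite Hs in *. nra. }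
  assert (L3 : 24 <= c1 / 4 * exp ((INR s - 1) * a)).
  { rewrite Hs. replace (U + 1 - 1) with U by ring.
    assert (exp (2 * Nr) <= exp (U * a)) by (apply exp_le; lra).
    assert (HEE : exp (2 * Nr) = E * E) by (unfold E; rewrite <- exp_plus; f_equal; ring).
    assert (98304 * Nr <= E) by nra.
    assert (c1 / 4 * (E * E) = E / (4096 * Nr)).
    { unfold c1. rewrite HaE. field. lra. }
    assert (24 <= E / (4096 * Nr)).
    { apply (Rmult_le_reg_r (4096 * Nr)); [lra|]. replace (E / (4096 * Nr) * (4096 * Nr)) with E by (field; lra). lra. }
    assert (c1 / 4 * exp (2 * Nr) <= c1 / 4 * exp (U * a)) by (apply Rmult_le_compat_l; lra).
    rewrite HEE in H3. lra. }
  assert (L4 : c1 * (INR s + 1) <= 1/32).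
  { rewrite Hs.
    assert (HcU : c1 * U = (U * a) * / (1024 * Nr)) by (unfold c1; field; lra).
    assert (Hinvn : 0 < / (1024 * Nr)) by (apply Rinv_0_lt_compat; lra).
    assert (HcU2 : c1 * U <= (2 * Nr + a) * / (1024 * Nr)) by (rewrite HcU; apply Rmult_le_compat_r; lra).
    assert (HcU3 : (2 * Nr + a) * / (1024 * Nr) <= 3 / 1024).
    { apply (Rmult_le_reg_r (1024 * Nr)); [lra|]. replace ((2 * Nr + a) * / (1024 * Nr) * (1024 * Nr)) with (2 * Nr + a) by (field; lra). lra. }
    assert (c1 <= 1 / 1024) by (apply (Rmult_le_reg_r (1024 * Nr)); [lra|]; nra).
    lra. }
  assert (L5 : 40 * c1 * INR s <= 1/2) by (rewrite Hs in L4; nra).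
  assert (Hs1 : (1 <= s)%nat) by (unfold s; lia).
  assert (HFP := finite_point a c1 Hapos ltac:(lra) Hcpos Hca s Hs1 L1 L3 L4 L5).
  destruct (limit_point c1 a (2 * a) HFP) as [t [Ht Hall]].
  set (eps := exp t - 1).
  assert (Heps0 : 0 < eps) by (unfold eps; pose proof (exp_ineq1 t ltac:(lra)); lra).
  assert (Heps4 : eps <= 4 * a).
  { unfold eps. pose proof (exp_le_inv1m t ltac:(lra)). pose proof (exp_pos t). nra. }
  assert (Hdel : 4 * a < delta).
  { rewrite HaE. apply (Rmult_lt_reg_r E); [lra|]. rewrite Rmult_assoc, Rinv_l by lra.
    assert (4 < delta * Nr).
    { apply (Rmult_lt_reg_l (/ delta)); [apply Rinv_0_lt_compat; lra|].
      replace (/ delta * (delta * Nr)) with Nr by (field; lra). unfold Rdiv in HN2. lra. }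
    nra. }
  exists eps. split; [assumption|split; [lra|split; [lra|]]].
  set (f := fun n => dist_int ((1 + eps) ^ n)).
  assert (Hf : forall n, (1 <= n)%nat -> f n >= c1).
  { intros n Hn. unfold f. replace (1 + eps) with (exp t) by (unfold eps; ring).
    rewrite exp_pow_INR. apply Hall. assumption. }
  destruct (completeness (fun w => exists n, (1 <= n)%nat /\ w = - f n)) as [l [Hub Hlub]].
  { exists 0. intros w [n [_ ->]]. unfold f. pose proof (dist_nonneg ((1 + eps) ^ n)). lra. }
  { exists (- f 1%nat). exists 1%nat. split; [lia|reflexivity]. }
  exists (- l). split.
  - split.
    + intros n Hn. assert (- f n <= l) by (apply Hub; exists n; split; [assumption|reflexivity]). lra.
    + intros m Hm. assert (l <= - m); [|lra].
      apply Hlub. intros w [n [Hn ->]]. specialize (Hm n Hn). lra.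
  - assert (Hr : c1 <= - l).
    { assert (l <= - c1); [|lra]. apply Hlub. intros w [n [Hn ->]]. specialize (Hf n Hn). lra. }
    assert (Hln : ln eps <= 2 - Nr).
    { apply Rle_trans with (ln (4 * a)); [apply ln_le; lra|].
      rewrite ln_mult by lra. unfold a. rewrite ln_exp. pose proof ln4_le2. lra. }
    assert (Habs : Rabs (ln eps) = - ln eps) by (apply Rabs_left; lra).
    rewrite Habs.
    assert (HL : Nr / 2 <= - ln eps) by lra.
    assert (Hinv : / (- ln eps) <= / (Nr / 2)) by (apply Rinv_le_contravar; lra).
    assert (Hinvpos : 0 < / (- ln eps)) by (apply Rinv_0_lt_compat; lra).
    replace (2 ^ 17) with 131072 by ring.
    assert (/ 131072 * eps * / - ln eps <= / 131072 * (4 * a) * / (Nr / 2)).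
    { apply Rmult_le_compat; [apply Rmult_le_pos; lra | lra | apply Rmult_le_compat_l; lra | lra]. }
    assert (/ 131072 * (4 * a) * / (Nr / 2) < c1).
    { unfold c1. replace (/ 131072 * (4 * a) * / (Nr / 2)) with (a / (16384 * Nr)) by (field; lra).
      apply Rmult_lt_compat_l; [lra|]. apply Rinv_lt_contravar; nra. }
    lra.
Qed.
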